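(* Let $1<p<\infty$, let $\Omega\subset\mathbb{R}^d$ be a bounded open set with $C^{1,\beta}$ boundary, let $\gamma$ be a conductivity on $\overline\Omega$ bounded from above and below by positive constants, and let the boundary voltage $v\in C^{1,\beta}$ be given; let $u$ solve $\operatorname{div}(\gamma|\nabla u|^{p-2}\nabla u)=0$ in $\Omega$, $u=v$ on $\partial\Omega$, and assume $u$ is continuously differentiable up to the boundary so that the strong Dirichlet-to-Neumann map $\Lambda^s_\gamma(v)(x_0)=\gamma(x_0)|\nabla u(x_0)|^{p-2}\nabla u(x_0)\cdot\nu(x_0)$ is defined at the points $x_0\in\partial\Omega$. Then for every $x_0\in\partial\Omega$ the equation \[(|\nabla_T u(x_0)|^2+t^2)^{\frac{p-2}{2}}\,t=\frac{1}{\gamma(x_0)}|\Lambda^s_\gamma(v)(x_0)|\] has a unique solution $t\in[0,\infty)$, and $\partial_\nu u(x_0)=t\,\operatorname{sign}(\Lambda^s_\gamma(v)(x_0))$. In particular $\partial_\nu u(x_0)$ is computable from $\nabla_T u(x_0)$ (which is determined by $v$), $\gamma(x_0)$ and $\Lambda^s_\gamma(v)(x_0)$.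
   Context: $\nu$ is the outer unit normal, $\partial_\nu u=\nu\cdot\nabla u$, and $\nabla_T u(x_0)$ is the orthogonal projection of $\nabla u(x_0)$ onto the tangent space of $\partial\Omega$ at $x_0$ (it coincides with the tangential gradient of $v$). The left-hand side of the equation, as a function of $t$, is interpreted by continuity at $t=0$ (value $0$). *)

(* Defs.v *)
From HB Require Import structures.
From mathcomp Require Import all_boot all_order all_algebra.
From mathcomp Require Import all_classical all_reals all_analysis.
Set Implicit Arguments. Unset Strict Implicit. Unset Printing Implicit Defensive.
Import Order.TTheory GRing.Theory Num.Theory.
Import numFieldNormedType.Exports.
Local Open Scope ring_scope.

Definition dotv {R : realType} {d : nat} (a b : 'rV[R]_d) : R :=
  \sum_(i < d) a 0 i * b 0 i.
Definition enorm {R : realType} {d : nat} (a : 'rV[R]_d) : R :=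
  Num.sqrt (dotv a a).

Definition grad {R : realType} {d : nat} (u : 'rV[R]_d -> R) (x : 'rV[R]_d)
  : 'rV[R]_d := \row_(i < d) derive u x (delta_mx 0 i).

(* orthogonal projection of w onto the tangent space {nu}^perp (nu unit) *)
Definition tang_proj {R : realType} {d : nat} (nu w : 'rV[R]_d) : 'rV[R]_d :=
  w - dotv w nu *: nu.

Definition DtN_strong {R : realType} {d : nat} (p : R) (gamma : 'rV[R]_d -> R)
  (u : 'rV[R]_d -> R) (nu : 'rV[R]_d) (x0 : 'rV[R]_d) : R :=
  gamma x0 * (enorm (grad u x0)) `^ (p - 2) * dotv (grad u x0) nu.

(* Main.v *)
Require Import Defs.
From HB Require Import structures.
From mathcomp Require Import all_boot all_order all_algebra.
From mathcomp Require Import all_classical all_reals all_analysis.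
From mathcomp Require Import ring lra.
Import Order.TTheory GRing.Theory Num.Theory.
Import numFieldNormedType.Exports.
Local Open Scope classical_set_scope.
Local Open Scope ring_scope.

Lemma F_lt (R : realType) (b q s t : R) : 0 <= b -> 0 < 1 + 2 * q ->
  0 <= s -> s < t -> (b + s ^+ 2) `^ q * s < (b + t ^+ 2) `^ q * t.
Proof.
move=> b0 q1 s0 st.
have t0 : 0 < t by apply: le_lt_trans st.
have Bt : 0 < b + t ^+ 2 by apply: ltr_wpDl => //; exact: exprn_gt0.
have Bs : 0 <= b + s ^+ 2 by apply: addr_ge0 => //; exact: sqr_ge0.
have [->|sn0] := eqVneq s 0; first by rewrite mulr0 mulr_gt0 // powR_gt0.
have sp : 0 < s by rewrite lt_def sn0.
have Bsp : 0 < b + s ^+ 2 by apply: ltr_wpDl => //; exact: exprn_gt0.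
have [q0|q0] := leP 0 q.
  have le1 : (b + s ^+ 2) `^ q <= (b + t ^+ 2) `^ q.
    apply: ge0_ler_powR => //; first by rewrite nnegrE ltW.
    by rewrite lerD2l ler_sqr ?nnegrE ?ltW.
  apply: (@lt_le_trans _ _ ((b + s ^+ 2) `^ q * t)).
    by rewrite ltr_pM2l // powR_gt0.
  by rewrite ler_wpM2r // ltW.
set k := t / s.
have k1 : 1 < k by rewrite /k ltr_pdivlMr // mul1r.
have k0 : 0 < k by apply: lt_trans k1.
have tk : t = k * s by rewrite /k divfK.
have le1 : b + t ^+ 2 <= k ^+ 2 * (b + s ^+ 2).
  rewrite tk exprMn mulrDr lerD2r.
  have : 1 <= k ^+ 2 by rewrite expr_ge1 // ltW.
  move=> h; rewrite -[X in X <= _]mul1r ler_wpM2r //.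
have le2 : (k ^+ 2 * (b + s ^+ 2)) `^ q <= (b + t ^+ 2) `^ q.
  have h : (b + t ^+ 2) `^ (- q) <= (k ^+ 2 * (b + s ^+ 2)) `^ (- q).
    apply: ge0_ler_powR => //; [lra|by rewrite nnegrE ltW|].
    by rewrite nnegrE ltW // mulr_gt0 // exprn_gt0.
  rewrite !powRN in h.
  rewrite -[X in X <= _]invrK -[X in _ <= X]invrK lef_pV2 ?posrE ?invr_gt0 ?powR_gt0 //.
  by rewrite mulr_gt0 // exprn_gt0.
rewrite (powRM q (exprn_ge0 2 (ltW k0)) Bs) in le2.
have kq : (k ^+ 2) `^ q = k `^ (2 * q) by rewrite -powR_mulrn ?ltW // -powRrM.
rewrite kq in le2.
have kk : k * k `^ (2 * q) = k `^ (1 + 2 * q).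
  by rewrite powRD ?powRr1 ?ltW // gt_eqF ?orbT ?implybT.
have kgt : 1 < k `^ (1 + 2 * q).
  have := @gt0_ltr_powR _ (1 + 2 * q) q1 1 k.
  by rewrite powR1; apply; rewrite ?nnegrE ?ltW.
apply: (@lt_le_trans _ _ (k `^ (2 * q) * (b + s ^+ 2) `^ q * t)); last first.
  by rewrite ler_wpM2r // ltW.
rewrite tk.
have -> : k `^ (2 * q) * (b + s ^+ 2) `^ q * (k * s) =
  ((b + s ^+ 2) `^ q * s) * (k * k `^ (2 * q)) by ring.
rewrite kk -[X in X < _]mulr1 ltr_pM2l //.
by rewrite mulr_gt0 // powR_gt0.
Qed.

Lemma dotvC (R : realType) (d : nat) (x y : 'rV[R]_d) : dotv x y = dotv y x.
Proof. by apply: eq_bigr => i _; rewrite mulrC. Qed.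

Lemma dotvBZ (R : realType) (d : nat) (x y z : 'rV[R]_d) (c : R) :
  dotv (x - c *: y) z = dotv x z - c * dotv y z.
Proof.
rewrite /dotv mulr_sumr -sumrB; apply: eq_bigr => i _.
by rewrite !mxE; ring.
Qed.

Lemma dotv_ge0 (R : realType) (d : nat) (x : 'rV[R]_d) : 0 <= dotv x x.
Proof. by apply: sumr_ge0 => i _; rewrite -expr2 sqr_ge0. Qed.

Arguments dotv_ge0 {R d}.
Arguments dotvC {R d}.
Arguments F_lt {R b q s t}.

Theorem lemma4p2 (R : realType) (d : nat) (p : R) (Omega : set 'rV[R]_d)
  (gamma : 'rV[R]_d -> R) (c1 c2 : R) (u : 'rV[R]_d -> R)
  (x0 nu : 'rV[R]_d) :
  1 < p ->
  open Omega -> bounded_set Omega ->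
  0 < c1 -> (forall x, closure Omega x -> c1 <= gamma x <= c2) ->
  closure Omega x0 -> ~ Omega x0 ->
  enorm nu = 1 ->
  differentiable u x0 ->
  let gT := tang_proj nu (grad u x0) in
  let L := DtN_strong p gamma u nu x0 in
  let E := fun t : R =>
    (enorm gT ^+ 2 + t ^+ 2) `^ ((p - 2) / 2) * t = `|L| / gamma x0 in
  (exists! t : R, 0 <= t /\ E t) /\
  (forall t : R, 0 <= t -> E t -> dotv (grad u x0) nu = t * Num.sg L).
Proof.
move=> p1 _ _ c10 hg cx0 _ nu1 _ gT L E.
have g0 : 0 < gamma x0.
  by have /andP[h _] := hg x0 cx0; apply: lt_le_trans h.
set g := grad u x0 in gT L E *.
set a := dotv g nu.
set D := dotv g g.
set q := (p - 2) / 2.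
have q1 : 0 < 1 + 2 * q by rewrite /q; lra.
have nn : dotv nu nu = 1.
  by rewrite -(sqr_sqrtr (dotv_ge0 nu)); move: nu1; rewrite /enorm => ->; rewrite expr1n.
have gTn : enorm gT ^+ 2 = D - a ^+ 2.
  rewrite /enorm sqr_sqrtr ?dotv_ge0 // /gT /tang_proj dotvBZ.
  rewrite [dotv g _]dotvC [dotv nu _]dotvC !dotvBZ nn -/D -/a (dotvC nu g) -/a.
  ring.
have b0 : 0 <= enorm gT ^+ 2 by rewrite sqr_ge0.
set b := enorm gT ^+ 2 in b0 gTn E *.
pose F t := (b + t ^+ 2) `^ q * t.
have Finj : forall s t, 0 <= s -> 0 <= t -> F s = F t -> s = t.
  move=> s t s0 t0 Fst; rewrite /F in Fst.
  have [st|ts|//] := ltgtP s t.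
    by have := F_lt b0 q1 s0 st; rewrite Fst ltxx.
  by have := F_lt b0 q1 t0 ts; rewrite Fst ltxx.
have bD : b + `|a| ^+ 2 = D by rewrite real_normK ?num_real // gTn; ring.
have powE : enorm g `^ (p - 2) = D `^ q.
  by rewrite /enorm -/D -powR12_sqrt ?dotv_ge0 // -powRrM /q mulrC.
have LE : `|L| / gamma x0 = D `^ q * `|a|.
  rewrite /L /DtN_strong -/a powE !normrM (gtr0_norm g0) ger0_norm ?powR_ge0 //.
  by field; rewrite gt_eqF.
have Ea : E `|a| by rewrite /E bD LE mulrC.
have Eu : forall t, 0 <= t -> E t -> t = `|a|.
  move=> t t0 Et; apply: Finj => //; rewrite /F.
  by rewrite /E in Et Ea; rewrite Et Ea.
split.
  exists `|a|; split; first by split.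
  by move=> t [t0 Et]; rewrite (Eu t t0 Et).
move=> t t0 Et; rewrite (Eu t t0 Et) -/a.
have [->|an0] := eqVneq a 0; first by rewrite normr0 mul0r.
have Dp : 0 < D.
  rewrite -bD; apply: ltr_wpDl => //.
  by rewrite exprn_gt0 // normr_gt0.
rewrite /L /DtN_strong -/a powE !sgrM (gtr0_sg g0) (gtr0_sg (powR_gt0 q Dp)).
by rewrite !mul1r mulrC mulr_sg_norm.
Qed.
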